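(* Assume $\ell=2$. An observed law $\mathcal P$ of $(Y,D,Z)$ with $\mathcal P(Z=0),\mathcal P(Z=1)>0$ is induced by some full data law satisfying exclusion, random assignment and consistency if and only if $$\sum_{k\in[n]}-p_{k0,1}+\sum_{k\in T}(p_{k1,0}-p_{k1,1})\le 0\quad\text{for all nonempty }T\subseteq\{0,\dots,n-2\},$$ $$\sum_{k\in[n]}-p_{k1,0}+\sum_{k\in T}(p_{k0,1}-p_{k0,0})\le 0\quad\text{for all nonempty }T\subsetneq[n],$$ $$\sum_{k\in[n]}-p_{k0,0}+\sum_{k\in T}(p_{k1,1}-p_{k1,0})\le 0\quad\text{for all nonempty }T\subseteq\{0,\dots,n-2\}.$$
   Context: $D\in\{0,1\}$ treatment; $Y$ outcome with values $\gamma_0<\dots<\gamma_{n-1}$; instrument $Z\in\{0,1\}$; $[n]=\{0,\dots,n-1\}$. Potential outcomes $Y^{(d,z)}$, potential treatments $D^{(z)}$. Exclusion: $Y^{(d,0)}=Y^{(d,1)}$ a.s., written $Y^{(d)}$. Random assignment: $Z\perp(Y^{(0)},Y^{(1)},D^{(0)},D^{(1)})$. Consistency: $Y=(1-D)Y^{(0)}+DY^{(1)}$, $D=\mathbb 1(Z=0)D^{(0)}+\mathbb 1(Z=1)D^{(1)}$. A full data law is a joint law of $(Y^{(0)},Y^{(1)},D^{(0)},D^{(1)},Z)$, inducing the observed law of $(Y,D,Z)$. $p_{yd,z}=\mathcal P(Y=\gamma_y,D=d\mid Z=z)$. *)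

(* Defs.v *)
From HB Require Import structures.
From mathcomp Require Import all_boot all_order all_algebra.
From mathcomp Require Import reals.
Set Implicit Arguments. Unset Strict Implicit. Unset Printing Implicit Defensive.
Import Order.TTheory GRing.Theory Num.Theory.
Local Open Scope ring_scope.

Section IV.
Variables (R : realType) (n : nat).

(* Observed law of (Y, D, Z): P k d z = P(Y = gamma_k, D = d, Z = z),
   with d, z : bool (true = 1). *)
Definition obs_law (P : 'I_n -> bool -> bool -> R) : Prop :=
  (forall k d z, 0 <= P k d z) /\ \sum_(k < n) \sum_(d : bool) \sum_(z : bool) P k d z = 1.

Definition PZ (P : 'I_n -> bool -> bool -> R) (z : bool) : R :=
  \sum_(k < n) \sum_(d : bool) P k d z.

(* p_{kd,z} = P(Y = gamma_k, D = d | Z = z) *)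
Definition pc (P : 'I_n -> bool -> bool -> R) (k : 'I_n) (d z : bool) : R :=
  P k d z / PZ P z.

(* Full data law of (Y^(0,0), Y^(0,1), Y^(1,0), Y^(1,1), D^(0), D^(1), Z):
   q y00 y01 y10 y11 d0 d1 z. *)
Definition full_type := 'I_n -> 'I_n -> 'I_n -> 'I_n -> bool -> bool -> bool -> R.

Definition full_law (q : full_type) : Prop :=
  (forall y00 y01 y10 y11 d0 d1 z, 0 <= q y00 y01 y10 y11 d0 d1 z) /\
  \sum_(y00 < n) \sum_(y01 < n) \sum_(y10 < n) \sum_(y11 < n)
    \sum_(d0 : bool) \sum_(d1 : bool) \sum_(z : bool) q y00 y01 y10 y11 d0 d1 z = 1.

Definition exclusion (q : full_type) : Prop :=
  forall y00 y01 y10 y11 d0 d1 z, q y00 y01 y10 y11 d0 d1 z != 0 ->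
    y00 = y01 /\ y10 = y11.

Definition qZ (q : full_type) (z : bool) : R :=
  \sum_(y00 < n) \sum_(y01 < n) \sum_(y10 < n) \sum_(y11 < n)
    \sum_(d0 : bool) \sum_(d1 : bool) q y00 y01 y10 y11 d0 d1 z.

Definition random_assignment (q : full_type) : Prop :=
  forall y00 y01 y10 y11 d0 d1 z,
    q y00 y01 y10 y11 d0 d1 z =
    (\sum_(z' : bool) q y00 y01 y10 y11 d0 d1 z') * qZ q z.

Definition Dobs (d0 d1 z : bool) : bool := if z then d1 else d0.
Definition Yobs (y00 y01 y10 y11 : 'I_n) (d z : bool) : 'I_n :=
  match d, z with
  | false, false => y00 | false, true => y01
  | true, false => y10 | true, true => y11
  end.

Definition induces (q : full_type) (P : 'I_n -> bool -> bool -> R) : Prop :=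
  forall k d z,
    P k d z =
    \sum_(y00 < n) \sum_(y01 < n) \sum_(y10 < n) \sum_(y11 < n)
      \sum_(d0 : bool) \sum_(d1 : bool)
        (if (Dobs d0 d1 z == d) && (Yobs y00 y01 y10 y11 (Dobs d0 d1 z) z == k)
         then q y00 y01 y10 y11 d0 d1 z else 0).

End IV.

(* Main.v *)
Require Import Defs.
From HB Require Import structures.
From mathcomp Require Import all_boot all_order all_algebra.
From mathcomp Require Import reals ring lra zify.
Import Order.TTheory GRing.Theory Num.Theory.
Local Open Scope ring_scope.
Set Implicit Arguments. Unset Strict Implicit.

Section S.
Variables (R : realType) (n : nat).

Definition S6 (F : 'I_n -> 'I_n -> 'I_n -> 'I_n -> bool -> bool -> R) : R :=
  \sum_(a < n) \sum_(b < n) \sum_(c < n) \sum_(d < n) \sum_(e : bool) \sum_(f : bool) F a b c d e f.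

Lemma S6_ler F G : (forall a b c d e f, F a b c d e f <= G a b c d e f) -> S6 F <= S6 G.
Proof. move=> H; rewrite /S6; do 6 (apply: ler_sum => ? _). exact: H. Qed.

Lemma S6_ext F G : (forall a b c d e f, F a b c d e f = G a b c d e f) -> S6 F = S6 G.
Proof. move=> H; rewrite /S6; do 6 (apply: eq_bigr => ? _). exact: H. Qed.

Lemma S6_mull (x : R) F : S6 (fun a b c d e f => x * F a b c d e f) = x * S6 F.
Proof. rewrite /S6; do 6 (rewrite mulr_sumr; apply: eq_bigr => ? _). by []. Qed.

Lemma S6_sum (I : finType) (A : pred I) (F : I -> 'I_n -> 'I_n -> 'I_n -> 'I_n -> bool -> bool -> R) :
  \sum_(i | A i) S6 (F i) = S6 (fun a b c d e f => \sum_(i | A i) F i a b c d e f).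
Proof. rewrite /S6; do 6 (rewrite [LHS]exchange_big; apply: eq_bigr => ? _). by []. Qed.

Lemma S6_diag (H : 'I_n -> 'I_n -> bool -> bool -> R) :
  S6 (fun a b c d e f => if (a == b) && (c == d) then H a c e f else 0) =
  \sum_(e : bool) \sum_(f : bool) \sum_(a < n) \sum_(c < n) H a c e f.
Proof.
have -> : S6 (fun a b c d e f => if (a == b) && (c == d) then H a c e f else 0) =
  \sum_(a < n) \sum_(c < n) \sum_(e : bool) \sum_(f : bool) H a c e f.
  rewrite /S6; apply: eq_bigr => a _.
  rewrite (bigD1 a) //= eqxx /= [X in _ + X]big1 ?addr0; last first.
    move=> b Hb; rewrite eq_sym in Hb; rewrite (negbTE Hb) /=.
    by do 2 (rewrite big1 // => ? _); rewrite big1 // => ? _; rewrite big1.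
  apply: eq_bigr => c _.
  rewrite (bigD1 c) //= eqxx /= [X in _ + X]big1 ?addr0 //.
  move=> d /negbTE Hd; rewrite eq_sym Hd /=.
  by rewrite big1 // => ? _; rewrite big1.
transitivity (\sum_(a < n) \sum_(e : bool) \sum_(c < n) \sum_(f : bool) H a c e f).
  by apply: eq_bigr => a _; rewrite exchange_big.
transitivity (\sum_(a < n) \sum_(e : bool) \sum_(f : bool) \sum_(c < n) H a c e f).
  by apply: eq_bigr => a _; apply: eq_bigr => e _; rewrite exchange_big.
rewrite exchange_big; apply: eq_bigr => e _.
by rewrite exchange_big.
Qed.

Lemma sum_cond (D : bool) (Y : 'I_n) (x : R) :
  \sum_(k < n) \sum_(d : bool) (if (D == d) && (Y == k) then x else 0) = x.
Proof.
rewrite (bigD1 Y) //= [\sum_(i < n | i != Y) _]big1 ?addr0; last first.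
  by move=> k Hk; rewrite big1 // => d _; rewrite [Y == k]eq_sym (negbTE Hk) andbF.
rewrite (bigD1 D) //= eqxx eqxx [\sum_(i : bool | i != D) _]big1 ?addr0 //.
by move=> d Hd; rewrite eq_sym (negbTE Hd).
Qed.

Lemma Yobs_diag (a c : 'I_n) d z : Yobs a a c c d z = if d then c else a.
Proof. by case: d; case: z. Qed.

Lemma cond_simpl (D d : bool) (a c k : 'I_n) :
  (D == d) && ((if D then c else a) == k) = (D == d) && ((if d then c else a) == k).
Proof. by case: eqP => [->|]. Qed.

Variable P : 'I_n -> bool -> bool -> R.

Lemma sum_PZ : obs_law P -> \sum_(z : bool) PZ P z = 1.
Proof.
move=> [_ H]; rewrite /PZ [LHS]exchange_big -H; apply: eq_bigr => k _.
by rewrite exchange_big.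
Qed.

Lemma sum_pc z : 0 < PZ P z -> \sum_(k < n) \sum_(d : bool) pc P k d z = 1.
Proof.
move=> Hz; rewrite /pc.
under eq_bigr => k _ do rewrite -mulr_suml.
by rewrite -mulr_suml mulfV // gt_eqF.
Qed.

Lemma pc_ge0 k d z : obs_law P -> 0 < PZ P z -> 0 <= pc P k d z.
Proof. by move=> [H _] Hz; rewrite /pc divr_ge0 // ltW. Qed.

Lemma nec (q : full_type R n) : obs_law P -> 0 < PZ P false -> 0 < PZ P true ->
  full_law q -> exclusion q -> random_assignment q -> induces q P ->
  forall d z (T : {set 'I_n}),
    \sum_(k < n) (if k \in T then pc P k d z else pc P k d (~~ z)) <= 1.
Proof.
move=> HP Hz0 Hz1 [Hq0 Hq1] Hex Hra Hin.
pose Q a b c d e f := \sum_(z : bool) q a b c d e f z.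
have HQ1 : S6 Q = 1 by exact: Hq1.
have HQ0 : forall a b c d e f, 0 <= Q a b c d e f.
  by move=> *; apply: sumr_ge0 => *; apply: Hq0.
pose cnd (k : 'I_n) (d z : bool) (a b c d' : 'I_n) (e f : bool) :=
  (Dobs e f z == d) && (Yobs a b c d' (Dobs e f z) z == k).
have HPk : forall k d z, P k d z = qZ q z * S6 (fun a b c d' e f => if cnd k d z a b c d' e f then Q a b c d' e f else 0).
  move=> k d z; rewrite -S6_mull (Hin k d z); apply: S6_ext => a b c d' e f.
  rewrite /cnd; case: ifP => _; last by rewrite mulr0.
  by rewrite Hra mulrC.
have HPZ : forall z, PZ P z = qZ q z.
  move=> z; rewrite /PZ.
  under eq_bigr => k _ do under eq_bigr => d _ do rewrite HPk.
  under eq_bigr => k _ do rewrite -mulr_sumr.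
  rewrite -mulr_sumr -[RHS]mulr1 -HQ1; congr (_ * _).
  under eq_bigr => k _ do rewrite S6_sum.
  rewrite S6_sum; apply: S6_ext => a b c d' e f.
  exact: sum_cond.
have HqZ : forall z, qZ q z != 0.
  by move=> z; rewrite -HPZ; case: z; rewrite gt_eqF.
have Hpc : forall k d z, pc P k d z = S6 (fun a b c d' e f => if cnd k d z a b c d' e f then Q a b c d' e f else 0).
  by move=> k d z; rewrite /pc HPk HPZ mulrC mulKf.
move=> d z T.
under eq_bigr => k _ do rewrite !Hpc.
rewrite -HQ1.
rewrite (_ : \sum_(k < n) _ = S6 (fun a b c d' e f => \sum_(k < n)
   (if k \in T then (if cnd k d z a b c d' e f then Q a b c d' e f else 0)
    else (if cnd k d (~~ z) a b c d' e f then Q a b c d' e f else 0)))); last first.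
  by rewrite -S6_sum; apply: eq_bigr => k _; case: (k \in T).
apply: S6_ler => a b c d' e f.
have [Q0|QN0] := eqVneq (Q a b c d' e f) 0.
  by rewrite Q0 big1 // => k _; rewrite !if_same.
have [Eab Ecd] : a = b /\ c = d'.
  move: QN0; rewrite /Q big_bool /=.
  have [H1|H1] := eqVneq (q a b c d' e f true) 0; last by move=> _; exact: (Hex _ _ _ _ _ _ _ H1).
  rewrite H1 add0r => H2; exact: (Hex _ _ _ _ _ _ _ H2).
subst b d'.
rewrite /cnd.
under eq_bigr => k _ do rewrite !Yobs_diag !cond_simpl.
set y := (if d then c else a).
rewrite (bigD1 y) //= [\sum_(i < n | i != y) _]big1 ?addr0; last first.
  by move=> k Hk; rewrite eq_sym in Hk; rewrite (negbTE Hk) !andbF !if_same.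
by rewrite eqxx !andbT; case: (y \in T); case: ifP; rewrite ?lexx ?HQ0.
Qed.

Lemma alg (x y w : 'I_n -> R) (Hs : \sum_(k < n) (w k + y k) = 1) (T : {set 'I_n}) :
  (\sum_(k < n) - w k + \sum_(k in T) (x k - y k) <= 0) <->
  (\sum_(k < n) (if k \in T then x k else y k) <= 1).
Proof.
have E : \sum_(k < n) (if k \in T then x k else y k) =
         \sum_(k < n) y k + \sum_(k in T) (x k - y k).
  rewrite [\sum_(k in T) _]big_mkcond -big_split; apply: eq_bigr => k _ /=.
  by case: (k \in T); rewrite ?addr0 // addrC subrK.
rewrite E sumrN; move: Hs; rewrite big_split /= => Hs; split => H; lra.
Qed.

Lemma allT (x y : 'I_n -> R) (Hx : \sum_(k < n) x k <= 1) (Hy : \sum_(k < n) y k <= 1)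
  (H : forall T : {set 'I_n}, T != set0 -> T != setT ->
       \sum_(k < n) (if k \in T then x k else y k) <= 1) (T : {set 'I_n}) :
  \sum_(k < n) (if k \in T then x k else y k) <= 1.
Proof.
have [->|T0] := eqVneq T set0.
  by under eq_bigr => k _ do rewrite in_set0.
have [->|T1] := eqVneq T setT.
  by under eq_bigr => k _ do rewrite in_setT.
exact: H.
Qed.

Lemma fam13 (x y : 'I_n -> R)
  (H1 : forall T : {set 'I_n}, T != set0 -> (forall k, k \in T -> (k.+1 < n)%N) ->
       \sum_(k < n) (if k \in T then x k else y k) <= 1)
  (H3 : forall T : {set 'I_n}, T != set0 -> (forall k, k \in T -> (k.+1 < n)%N) ->
       \sum_(k < n) (if k \in T then y k else x k) <= 1)
  (T : {set 'I_n}) : T != set0 -> T != setT ->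
  \sum_(k < n) (if k \in T then x k else y k) <= 1.
Proof.
move=> T0 T1.
case: (boolP [forall k, (k \in T) ==> (k.+1 < n)%N]) => [/forallP Hall|].
  apply: H1 => // k kT; move: (Hall k); rewrite kT; exact.
move=> /forallPn [j]; rewrite negb_imply => /andP [jT jn].
have := H3 (~: T); under eq_bigr => k _ do rewrite in_setC if_neg.
apply.
  apply/eqP => HC; move/eqP: T1; apply; by rewrite -[T]setCK HC setC0.
move=> k; rewrite in_setC => kT.
have kj : (nat_of_ord k != nat_of_ord j).
  by apply/negP => /eqP /ord_inj E; move: kT; rewrite E jT.
have := ltn_ord k; have := ltn_ord j; move: jn kj; lia.
Qed.

Lemma sumL (F : 'I_n -> 'I_n -> R) k :
  \sum_(a < n) \sum_(c < n) (if a == k then F a c else 0) = \sum_(c < n) F k c.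
Proof.
rewrite (bigD1 k) //= eqxx [\sum_(i < n | i != k) _]big1 ?addr0 //.
by move=> a /negbTE Ha; rewrite big1 // => c _; rewrite Ha.
Qed.

Lemma sumR (F : 'I_n -> 'I_n -> R) k :
  \sum_(a < n) \sum_(c < n) (if c == k then F a c else 0) = \sum_(a < n) F a k.
Proof. by apply: eq_bigr => a _; rewrite -big_mkcond big_pred1_eq. Qed.

Lemma margL (m v : 'I_n -> R) (m0 : forall i, 0 <= m i) (v0 : forall i, 0 <= v i)
  (E : \sum_(k < n) m k = \sum_(k < n) v k) i :
  \sum_(j < n) (m i * v j / \sum_(k < n) v k) = m i.
Proof.
rewrite -mulr_suml -mulr_sumr.
have [S0|SN] := eqVneq (\sum_(k < n) v k) 0; last by rewrite mulfK.
rewrite S0 mulr0 mul0r; symmetry.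
apply: (psumr_eq0P (P := xpredT)) => //; by rewrite E.
Qed.

Lemma margR (m v : 'I_n -> R) (m0 : forall i, 0 <= m i) (v0 : forall i, 0 <= v i)
  (E : \sum_(k < n) m k = \sum_(k < n) v k) j :
  \sum_(i < n) (m i * v j / \sum_(k < n) v k) = v j.
Proof.
rewrite -mulr_suml -mulr_suml E.
have [S0|SN] := eqVneq (\sum_(k < n) v k) 0; last by rewrite mulrAC mulfV ?mul1r.
rewrite S0 mul0r mul0r; symmetry.
by apply: (psumr_eq0P (P := xpredT)).
Qed.

Lemma scale (S p : R) : 0 <= S -> 0 <= p -> p <= S ->
  [/\ 0 <= p / S, p / S <= 1 & S * (p / S) = p].
Proof.
move=> S0 p0 pS; have [SE|SN] := eqVneq S 0.
  have -> : p = 0 by lra.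
  by rewrite mul0r mulr0; split.
have Sp : 0 < S by rewrite lt_def SN S0.
split; first by rewrite divr_ge0.
  by rewrite ler_pdivrMr // mul1r.
by rewrite mulrC divfK.
Qed.

Definition posp (x : R) := if 0 <= x then x else 0.
Lemma posp_ge0 x : 0 <= posp x. Proof. by rewrite /posp; case: ifP => // _. Qed.
Lemma posp_le x S : 0 <= S -> x <= S -> posp x <= S.
Proof. by rewrite /posp; case: ifP. Qed.
Lemma posp_diff x : posp x - posp (- x) = x.
Proof. rewrite /posp; case: ifP => H1; case: ifP => H2; lra. Qed.


Lemma sum_pc2 z : 0 < PZ P z ->
  \sum_(k < n) (pc P k false z + pc P k true z) = 1 /\
  \sum_(k < n) (pc P k true z + pc P k false z) = 1.
Proof.
move=> Hz; rewrite -(sum_pc Hz); split; apply: eq_bigr => k _; rewrite big_bool //=.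
by rewrite addrC.
Qed.

Definition va k := pc P k false false.
Definition vb k := pc P k true false.
Definition vc k := pc P k false true.
Definition ve k := pc P k true true.
Definition Mac k := if va k < vc k then va k else vc k.
Definition Mbe k := if vb k < ve k then vb k else ve k.
Definition Sac := \sum_(k < n) Mac k.
Definition Sbe := \sum_(k < n) Mbe k.
Definition Dd := \sum_(k < n) (ve k - Mbe k) - \sum_(k < n) (va k - Mac k).
Definition tt := posp Dd / Sac.
Definition uu := posp (- Dd) / Sbe.
Definition mu (t0 t1 : bool) k : R :=
  match t0, t1 with
  | false, false => Mac k - Mac k * tt
  | false, true => va k - Mac k + Mac k * tt
  | true, false => vc k - Mac k + Mac k * tt
  | true, true => Mbe k - Mbe k * uu
  end.
Definition nu (t0 t1 : bool) k : R :=
  match t0, t1 with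
  | false, false => Mac k - Mac k * tt
  | false, true => ve k - Mbe k + Mbe k * uu
  | true, false => vb k - Mbe k + Mbe k * uu
  | true, true => Mbe k - Mbe k * uu
  end.
Definition W (t0 t1 : bool) (y0 y1 : 'I_n) : R :=
  mu t0 t1 y0 * nu t0 t1 y1 / \sum_(k < n) nu t0 t1 k.

Section Suff.
Hypotheses (HP : obs_law P) (Hz0 : 0 < PZ P false) (Hz1 : 0 < PZ P true)
  (Hbe : forall T : {set 'I_n}, \sum_(k < n) (if k \in T then ve k else vb k) <= 1)
  (Hac : forall T : {set 'I_n}, \sum_(k < n) (if k \in T then vc k else va k) <= 1).

Lemma va0 k : 0 <= va k. Proof. exact: pc_ge0. Qed.
Lemma vb0 k : 0 <= vb k. Proof. exact: pc_ge0. Qed.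
Lemma vc0 k : 0 <= vc k. Proof. exact: pc_ge0. Qed.
Lemma ve0 k : 0 <= ve k. Proof. exact: pc_ge0. Qed.

Lemma sum_ab : \sum_(k < n) va k + \sum_(k < n) vb k = 1.
Proof.
rewrite -(sum_pc Hz0) -big_split; apply: eq_bigr => k _.
by rewrite big_bool /= addrC.
Qed.
Lemma sum_ce : \sum_(k < n) vc k + \sum_(k < n) ve k = 1.
Proof.
rewrite -(sum_pc Hz1) -big_split; apply: eq_bigr => k _.
by rewrite big_bool /= addrC.
Qed.

Lemma Mac0 k : 0 <= Mac k. Proof. by rewrite /Mac; case: ifP => _; [exact: va0|exact: vc0]. Qed.
Lemma Mbe0 k : 0 <= Mbe k. Proof. by rewrite /Mbe; case: ifP => _; [exact: vb0|exact: ve0]. Qed.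
Lemma Mac_a k : Mac k <= va k. Proof. rewrite /Mac; case: ifP => H //; lra. Qed.
Lemma Mac_c k : Mac k <= vc k. Proof. rewrite /Mac; case: ifP => H //; lra. Qed.
Lemma Mbe_b k : Mbe k <= vb k. Proof. rewrite /Mbe; case: ifP => H //; lra. Qed.
Lemma Mbe_e k : Mbe k <= ve k. Proof. rewrite /Mbe; case: ifP => H //; lra. Qed.

Lemma N3 : Dd <= Sac.
Proof.
have := Hbe [set k | vb k < ve k].
rewrite (_ : \sum_(k < n) _ = \sum_(k < n) (ve k - Mbe k + vb k)); last first.
  apply: eq_bigr => k _; rewrite inE /Mbe; case: ifP => _; ring.
rewrite /Dd /Sac big_split /= !sumrB /Sbe.
have := sum_ab; lra.
Qed.

Lemma N4 : - Dd <= Sbe.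
Proof.
have := Hac [set k | va k < vc k].
rewrite (_ : \sum_(k < n) _ = \sum_(k < n) (va k - Mac k + vc k)); last first.
  apply: eq_bigr => k _; rewrite inE /Mac; case: ifP => _; ring.
rewrite /Dd /Sbe big_split /= !sumrB /Sac.
have := sum_ce; lra.
Qed.

Lemma Sac0 : 0 <= Sac. Proof. by apply: sumr_ge0 => k _; exact: Mac0. Qed.
Lemma Sbe0 : 0 <= Sbe. Proof. by apply: sumr_ge0 => k _; exact: Mbe0. Qed.

Lemma ttP : [/\ 0 <= tt, tt <= 1 & Sac * tt = posp Dd].
Proof. exact: (scale Sac0 (posp_ge0 _) (posp_le Sac0 N3)). Qed.
Lemma uuP : [/\ 0 <= uu, uu <= 1 & Sbe * uu = posp (- Dd)].
Proof. exact: (scale Sbe0 (posp_ge0 _) (posp_le Sbe0 N4)). Qed.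

Lemma aux0 (M t : R) : 0 <= M -> t <= 1 -> 0 <= M - M * t.
Proof. by move=> M0 t1; rewrite -{1}(mulr1 M) -mulrBr mulr_ge0 // subr_ge0. Qed.
Lemma aux1 (x M t : R) : M <= x -> 0 <= M -> 0 <= t -> 0 <= x - M + M * t.
Proof. by move=> Mx M0 t0; rewrite addr_ge0 ?mulr_ge0 // subr_ge0. Qed.

Lemma mu0 t0 t1 k : 0 <= mu t0 t1 k.
Proof.
case: ttP => t0' t1' _; case: uuP => u0 u1 _.
case: t0; case: t1 => /=; auto using aux0, aux1, Mac0, Mbe0, Mac_a, Mac_c.
Qed.
Lemma nu0 t0 t1 k : 0 <= nu t0 t1 k.
Proof.
case: ttP => t0' t1' _; case: uuP => u0 u1 _.
case: t0; case: t1 => /=; auto using aux0, aux1, Mac0, Mbe0, Mbe_b, Mbe_e.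
Qed.

Lemma sum_aff (x M : 'I_n -> R) t :
  \sum_(k < n) (x k - M k + M k * t) = \sum_(k < n) x k - \sum_(k < n) M k + (\sum_(k < n) M k) * t.
Proof. by rewrite big_split /= sumrB mulr_suml. Qed.
Lemma sum_aff0 (M : 'I_n -> R) t :
  \sum_(k < n) (M k - M k * t) = \sum_(k < n) M k - (\sum_(k < n) M k) * t.
Proof. by rewrite sumrB mulr_suml. Qed.

Lemma mass t0 t1 : \sum_(k < n) mu t0 t1 k = \sum_(k < n) nu t0 t1 k.
Proof.
case: t0; case: t1 => //=; rewrite !sum_aff -/Sac -/Sbe;
case: ttP => _ _ ->; case: uuP => _ _ ->;
have := posp_diff Dd; rewrite /Dd !sumrB -/Sac -/Sbe; have := sum_ab; have := sum_ce; lra.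
Qed.

Lemma W0 t0 t1 y0 y1 : 0 <= W t0 t1 y0 y1.
Proof. by rewrite /W divr_ge0 ?mulr_ge0 ?mu0 ?nu0 // sumr_ge0 // => k _; exact: nu0. Qed.

Lemma WL t0 t1 y0 : \sum_(y1 < n) W t0 t1 y0 y1 = mu t0 t1 y0.
Proof. exact: (margL (@mu0 t0 t1) (@nu0 t0 t1) (mass t0 t1)). Qed.
Lemma WR t0 t1 y1 : \sum_(y0 < n) W t0 t1 y0 y1 = nu t0 t1 y1.
Proof. exact: (margR (@mu0 t0 t1) (@nu0 t0 t1) (mass t0 t1)). Qed.

Lemma Wtot : \sum_(e : bool) \sum_(f : bool) \sum_(a < n) \sum_(c < n) W e f a c = 1.
Proof.
under eq_bigr => e _ do under eq_bigr => f _ do under eq_bigr => a _ do rewrite WL.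
rewrite !big_bool /= (mass true true) (mass true false) -sum_ab.
rewrite -!big_split /=; apply: eq_bigr => i _; ring.
Qed.


Definition qq : full_type R n := fun a b c d e f z =>
  (if (a == b) && (c == d) then W e f a c else 0) * PZ P z.

Lemma PE k d z : P k d z = pc P k d z * PZ P z.
Proof. by rewrite /pc divfK //; case: z; rewrite gt_eqF. Qed.

Lemma suff_q : full_law qq /\ exclusion qq /\ random_assignment qq /\ induces qq P.
Proof.
have Xsum : forall a b c d e f, \sum_(z : bool) qq a b c d e f z =
    (if (a == b) && (c == d) then W e f a c else 0).
  by move=> *; rewrite /qq -mulr_sumr sum_PZ // mulr1.
have X1 : S6 (fun a b c d e f => if (a == b) && (c == d) then W e f a c else 0) = 1.
  by rewrite S6_diag Wtot.
have HqZ : forall z, qZ qq z = PZ P z.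
  move=> z; rewrite /qZ.
  transitivity (S6 (fun a b c d e f => PZ P z * (if (a == b) && (c == d) then W e f a c else 0))).
    by apply: S6_ext => a b c d e f; rewrite /qq mulrC.
  by rewrite S6_mull X1 mulr1.
split; [split|split; [|split]].
- move=> a b c d e f z; rewrite /qq mulr_ge0 //; last by case: z; apply: ltW.
  by case: ifP => _; [exact: W0|].
- rewrite -X1; apply: S6_ext => a b c d e f; exact: Xsum.
- move=> a b c d e f z; rewrite /qq.
  case: ifP => [/andP [/eqP -> /eqP ->] //|_]; by rewrite mul0r eqxx.
- by move=> a b c d e f z; rewrite Xsum HqZ.
move=> k d z.
transitivity (S6 (fun a b c d' e f => if (a == b) && (c == d') then
   (if (Dobs e f z == d) && (Yobs a a c c (Dobs e f z) z == k) then W e f a c * PZ P z else 0)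
   else 0)); last first.
  apply: S6_ext => a b c d' e f; rewrite /qq.
  case: eqP => [<-|_]; case: eqP => [<-|_] //=; by rewrite ?mul0r !if_same.
rewrite S6_diag !big_bool /=.
have WRx : forall t0 t1 y x, \sum_(i < n) (W t0 t1 i y * x) = nu t0 t1 y * x.
  by move=> *; rewrite -mulr_suml WR.
have WLx : forall t0 t1 y x, \sum_(i < n) (W t0 t1 y i * x) = mu t0 t1 y * x.
  by move=> *; rewrite -mulr_suml WL.
case: d; case: z => /=; rewrite !big1_eq ?sumR ?sumL ?addr0 ?add0r ?WRx ?WLx PE -mulrDl;
  congr (_ * _); rewrite /= /va /vb /vc /ve; ring.
Qed.
End Suff.
End S.

Unset Implicit Arguments.
Theorem theorem5 (R : realType) (n : nat) (P : 'I_n -> bool -> bool -> R) :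
  obs_law P -> 0 < PZ P false -> 0 < PZ P true ->
  ((exists q : full_type R n,
      full_law q /\ exclusion q /\ random_assignment q /\ induces q P) <->
   ((forall T : {set 'I_n}, T != set0 -> (forall k, k \in T -> (k.+1 < n)%N) ->
       \sum_(k < n) - pc P k false true
       + \sum_(k in T) (pc P k true false - pc P k true true) <= 0) /\
    (forall T : {set 'I_n}, T != set0 -> T != setT ->
       \sum_(k < n) - pc P k true false
       + \sum_(k in T) (pc P k false true - pc P k false false) <= 0) /\
    (forall T : {set 'I_n}, T != set0 -> (forall k, k \in T -> (k.+1 < n)%N) ->
       \sum_(k < n) - pc P k false false
       + \sum_(k in T) (pc P k true true - pc P k true false) <= 0))).
Proof.
move=> HP Hz0 Hz1.
have [S0a S0b] := sum_pc2 Hz0; have [S1a S1b] := sum_pc2 Hz1.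
split.
- case=> q [Hfl [Hex [Hra Hin]]].
  have N := nec HP Hz0 Hz1 Hfl Hex Hra Hin.
  split; [|split] => T T0 T1.
  + apply/(@alg R n (fun k => pc P k true false) (fun k => pc P k true true) (fun k => pc P k false true) _ T) => //; exact: (N true false T).
  + apply/(@alg R n (fun k => pc P k false true) (fun k => pc P k false false) (fun k => pc P k true false) _ T) => //; exact: (N false true T).
  + apply/(@alg R n (fun k => pc P k true true) (fun k => pc P k true false) (fun k => pc P k false false) _ T) => //; exact: (N true true T).
- move=> [F1 [F2 F3]].
  have sab := sum_ab Hz0; have sce := sum_ce Hz1.
  have Pa : 0 <= \sum_(k < n) va P k by apply: sumr_ge0 => k _; exact: va0.
  have Pc : 0 <= \sum_(k < n) vc P k by apply: sumr_ge0 => k _; exact: vc0.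
  have Pb : 0 <= \sum_(k < n) vb P k by apply: sumr_ge0 => k _; exact: vb0.
  have Pe : 0 <= \sum_(k < n) ve P k by apply: sumr_ge0 => k _; exact: ve0.
  have Hbe : forall T : {set 'I_n}, \sum_(k < n) (if k \in T then ve P k else vb P k) <= 1.
    apply: allT; [lra|lra|].
    apply: fam13 => T T0 T1.
    + apply/(@alg R n (fun k => pc P k true true) (fun k => pc P k true false) (fun k => pc P k false false) _ T) => //; exact: F3.
    + apply/(@alg R n (fun k => pc P k true false) (fun k => pc P k true true) (fun k => pc P k false true) _ T) => //; exact: F1.
  have Hac : forall T : {set 'I_n}, \sum_(k < n) (if k \in T then vc P k else va P k) <= 1.
    apply: allT; [lra|lra|] => T T0 T1.
    apply/(@alg R n (fun k => pc P k false true) (fun k => pc P k false false) (fun k => pc P k true false) _ T) => //; exact: F2.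
  exists (qq P); exact: (suff_q HP Hz0 Hz1 Hbe Hac).
Qed.
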